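(* Let $\mathbf{a}=a_1a_2\cdots a_k\in\mathbb{N}^k$. Then $\hat{A}_{\mathbf{a}}$ and $A_{\mathbf{a}}$ are primitive and have the same Perron–Frobenius eigenvalue $E_{\mathbf{a}}$. Moreover, $q_{kn}(\alpha)\sim E_{\mathbf{a}}^n$ for all $\alpha\in\mathcal{P}(\mathbf{a})$.
   Context: For $n\in\mathbb{N}$ let the alphabet be $\mathscr{A}_n=\{(\mathbf{1},i)_n:1\le i\le n+1\}\cup\{(\mathbf{2},1)_n\}\cup\{(\mathbf{3},i)_n:1\le i\le n\}$; for $e=(\mathbf{t},i)_n$ its type is $\mathbf{t}(e)=\mathbf{t}$. For $\mathbf{t}\in\{\mathbf{1},\mathbf{2},\mathbf{3}\}$ and $\hat e\in\mathscr{A}_m$, write $\mathbf{t}\to\hat e$ iff $(\mathbf{t},\hat e)$ is one of: $(\mathbf{1},(\mathbf{2},1)_m)$; $(\mathbf{2},(\mathbf{1},i)_m)$ with $1\le i\le m+1$; $(\mathbf{2},(\mathbf{3},i)_m)$ with $1\le i\le m$; $(\mathbf{3},(\mathbf{1},i)_m)$ with $1\le i\le m$; $(\mathbf{3},(\mathbf{3},i)_m)$ with $1\le i\le m-1$. For $e\in\mathscr{A}_n,\hat e\in\mathscr{A}_m$, write $e\to\hat e$ iff $\mathbf{t}(e)\to\hat e$. For $\mathbf{a}=a_1\cdots a_k$, let $\mathcal{A}_{\mathbf{a}}=\{e_1\cdots e_k: e_i\in\mathscr{A}_{a_i},\ e_i\to e_{i+1},\ 1\le i<k\}$; for $\mathbf{v}=e_1\cdots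 e_k\in\mathcal{A}_{\mathbf{a}}$ its header is $h_{\mathbf{v}}=e_1$ and its tail type is $\mathbf{t}(\mathbf{v})=\mathbf{t}(e_k)$. The incidence matrix $A_{\mathbf{a}}=(a_{\mathbf{v}\mathbf{w}})_{\mathbf{v},\mathbf{w}\in\mathcal{A}_{\mathbf{a}}}$ has $a_{\mathbf{v}\mathbf{w}}=1$ if $\mathbf{t}(\mathbf{v})\to h_{\mathbf{w}}$ and $0$ otherwise. For $m\in\mathbb{N}$ let $\hat A_m=\begin{pmatrix}0&1&0\\ m+1&0&m\\ m&0&m-1\end{pmatrix}$ and $\hat A_{\mathbf{a}}=\hat A_{a_k}\cdots\hat A_{a_2}\hat A_{a_1}$. A nonnegative square matrix is primitive if some power has all entries positive. For irrational $\alpha=[a_1,a_2,\dots]$ (continued fraction), $q_n(\alpha)$ are the denominators of the convergents: $q_{-1}=0$, $q_0=1$, $q_{n+1}=a_{n+1}q_n+q_{n-1}$. $\mathcal{P}(\mathbf{a})$ is the set of $\alpha\in[0,1]\setminus\mathbb{Q}$ with purely periodic expansion $\alpha=[\overline{a_1,\dots,a_k}]$. For positive sequences, $x_n\sim y_n$ means $C^{-1}y_n\le x_n\le Cy_n$ for some constant $C>1$ independent of $n$. *)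

(* Defs.v *)
From HB Require Import structures.
From mathcomp Require Import all_boot all_order all_algebra all_field.
From mathcomp Require Import reals.
Set Implicit Arguments. Unset Strict Implicit. Unset Printing Implicit Defensive.
Import Order.TTheory GRing.Theory Num.Theory.
Local Open Scope ring_scope.

(* Types 1,2,3 are encoded by the ordinals 0,1,2 of 'I_3. *)

Definition in_alph (n : nat) (t : 'I_3) (i : nat) : bool :=
  match val t with
  | 0 => (1 <= i <= n.+1)%N
  | 1 => (i == 1)%N
  | _ => (1 <= i <= n)%N
  end.

Definition arrow (t : 'I_3) (m : nat) (t' : 'I_3) (i : nat) : bool :=
  match val t, val t' with
  | 0, 1 => (i == 1)%N
  | 1, 0 => (1 <= i <= m.+1)%N
  | 1, 2 => (1 <= i <= m)%N
  | 2, 0 => (1 <= i <= m)%N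
  | 2, 2 => (1 <= i <= m.-1)%N
  | _, _ => false
  end.

Definition idxB (a : seq nat) : nat := (\max_(x <- a) x).+2.

Definition letter (a : seq nat) := ('I_3 * 'I_(idxB a))%type.

Definition valid_word (a : seq nat) (w : (size a).-tuple (letter a)) : bool :=
  [forall j : 'I_(size a),
     in_alph (nth 0%N a j) (tnth w j).1 (tnth w j).2] &&
  [forall j : 'I_(size a), forall j' : 'I_(size a),
     (j'.+1 == j)%N ==>
       arrow (tnth w j').1 (nth 0%N a j) (tnth w j).1 (tnth w j).2].

Definition Words (a : seq nat) := {w : (size a).-tuple (letter a) | valid_word w}.

Definition header (a : seq nat) (v : Words a) : letter a :=
  nth (ord0, ord0) (val (val v)) 0.
Definition tail_type (a : seq nat) (v : Words a) : 'I_3 :=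
  (nth (ord0, ord0) (val (val v)) (size a).-1).1.

Definition A_word (a : seq nat) : 'M[algC]_(#|{: Words a}|) :=
  \matrix_(i, j)
    (arrow (tail_type (enum_val i)) (head 0%N a)
           (header (enum_val j)).1 (header (enum_val j)).2)%:R.

Definition Ahat (m : nat) : 'M[algC]_3 :=
  \matrix_(i < 3, j < 3)
    match val i, val j with
    | 0, 1 => 1
    | 1, 0 => m.+1%:R
    | 1, 2 => m%:R
    | 2, 0 => m%:R
    | 2, 2 => m.-1%:R
    | _, _ => 0
    end.

Definition Ahat_word (a : seq nat) : 'M[algC]_3 :=
  foldl (fun M m => Ahat m *m M) 1%:M a.

Definition primitive (n : nat) (M : 'M[algC]_n) : Prop :=
  (forall i j, 0 <= M i j) /\ exists p : nat, forall i j, 0 < (M ^+ p) i j.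

(* Perron-Frobenius eigenvalue = spectral radius *)
Definition PF_eigenvalue (n : nat) (M : 'M[algC]_n) (r : algC) : Prop :=
  (exists2 l, root (char_poly M) l & `|l| = r) /\
  (forall l, root (char_poly M) l -> `|l| <= r).

Definition gauss (R : realType) (x : R) : R := x^-1 - (Num.floor x^-1)%:~R.
(* cf_digit x n = a_{n+1}(x) *)
Definition cf_digit (R : realType) (x : R) (n : nat) : int :=
  Num.floor (iter n (@gauss R) x)^-1.

(* (q_{n-1}, q_n) for digit sequence d (d n = a_{n+1}) *)
Fixpoint qpair (d : nat -> nat) (n : nat) : nat * nat :=
  match n with
  | 0 => (0, 1)%N
  | n'.+1 => let: (x, y) := qpair d n' in (y, d n' * y + x)%N
  end.
Definition qn (R : realType) (x : R) (n : nat) : nat :=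
  (qpair (fun j => `|cf_digit x j|%N) n).2.

Definition in_P (R : realType) (a : seq nat) (x : R) : Prop :=
  0 <= x <= 1 /\ ~ (exists q : rat, x = ratr q) /\
  forall n : nat, cf_digit x n = (nth 0%N a (n %% size a))%:Z.

(* Main.v *)
Require Import Defs.
From HB Require Import structures.
From mathcomp Require Import all_boot all_order all_algebra all_field.
From mathcomp Require Import reals.
From mathcomp Require Import ring lra zify.
Import Order.TTheory GRing.Theory Num.Theory.
Local Open Scope ring_scope.

Module Aux.
Set Implicit Arguments. Unset Strict Implicit. Unset Printing Implicit Defensive.

Definition stepL (m : nat) (t : nat * nat * nat * nat) :=
  let: (p, q, r, s) := t in (r, s, p + m * r, q + m * s)%N.
Definition stepR (m : nat) (t : nat * nat * nat * nat) :=
  let: (p, q, r, s) := t in (q, p + m * q, s, r + m * s)%N.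
Definition tr4 (t : nat * nat * nat * nat) :=
  let: (p, q, r, s) := t in (p, r, q, s).
Definition I4 : nat * nat * nat * nat := (1, 0, 0, 1)%N.
Definition pent (a : seq nat) := foldl (fun t m => stepL m t) I4 a.
Definition pentR (a : seq nat) := foldr stepL I4 a.

Lemma stepLR m x t : stepL x (stepR m t) = stepR m (stepL x t).
Proof. case: t => [[[p q] r] s] /=; congr (_, _, _, _); ring. Qed.

Lemma pentR_rcons a m : pentR (rcons a m) = stepR m (pentR a).
Proof.
elim: a => [|x a IH] /=; first by rewrite /stepR /stepL /I4 /=; congr (_,_,_,_); ring.
by rewrite IH stepLR.
Qed.

Lemma tr4_stepL m t : tr4 (stepL m t) = stepR m (tr4 t).
Proof. by case: t => [[[p q] r] s]. Qed.

Lemma pentR_tr a : pentR a = tr4 (pent a).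
Proof.
elim/last_ind: a => [|a m IH] //.
by rewrite pentR_rcons /pent foldl_rcons -/(pent a) tr4_stepL IH.
Qed.

Definition posq (t : nat * nat * nat * nat) :=
  let: (p, q, r, s) := t in [&& 0 < q, 0 < r & 0 < s]%N.


Definition stepf (xy : nat * nat) (m : nat) := (xy.2, m * xy.2 + xy.1)%N.
Lemma qpair_S d n : qpair d n.+1 = stepf (qpair d n) (d n).
Proof. by rewrite /=; case: (qpair d n). Qed.

Lemma qpair_add d j b : (forall i, (i < size b)%N -> d (j + i)%N = nth 0%N b i) ->
  qpair d (j + size b) = foldl stepf (qpair d j) b.
Proof.
elim: b j => [|m b IH] j H /=; first by rewrite addn0.
rewrite addnS -addSn IH; last by move=> i hi; rewrite addSnnS H.
have := H 0%N isT; rewrite addn0 /= => <-; by case: (qpair d j).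
Qed.

Definition lin (t : nat * nat * nat * nat) (xy : nat * nat) :=
  let: (p, q, r, s) := t in (p * xy.1 + q * xy.2, r * xy.1 + s * xy.2)%N.

Lemma foldl_stepf_lin a t xy :
  foldl stepf (lin t xy) a = lin (foldl (fun t m => stepL m t) t a) xy.
Proof.
elim: a t => [|m a IH] t //=; rewrite -IH; congr foldl.
case: t => [[[p q] r] s]; rewrite /stepf /=; congr (_, _); ring.
Qed.

Lemma lin_I4 xy : lin I4 xy = xy.
Proof. by case: xy => x y; rewrite /= !mul1n !mul0n addn0. Qed.

Lemma qpair_le d n : (forall j, 0 < d j)%N -> ((qpair d n).1 <= (qpair d n).2)%N.
Proof.
move=> hd; elim: n => [|n IH] //; rewrite qpair_S /stepf /=.
have := hd n; case: (d n) => // k _; rewrite mulSn; lia.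
Qed.

Lemma foldl_posq a t : all (fun x => 0 < x)%N a -> posq t ->
  posq (foldl (fun t m => stepL m t) t a).
Proof.
elim: a t => [|x a IH] t /=; first by move=> _ h.
move=> /andP[x0 ha] pt; apply: IH => //.
case: t pt => [[[p q] r] s] /= /and3P[q0 r0 s0].
apply/and3P; split; lia.
Qed.
Lemma pent_pos a : (0 < size a)%N -> all (fun x => 0 < x)%N a -> posq (pent a).
Proof.
case: a => [//|m a] _ /= /andP[m0 ha].
rewrite /pent /=; apply: foldl_posq => //; rewrite /stepL /I4 /=; lia.
Qed.

Definition Qm : 'M[algC]_3 := \matrix_(i < 3, j < 3)
  match val i, val j with
  | 0, 0 => 1 | 0, 2 => 1 | 1, 1 => 1 | 1, 2 => -1
  | 2, 0 => -1 | 2, 1 => 1 | 2, 2 => -1 | _, _ => 0 end.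
Definition Rm : 'M[algC]_3 := \matrix_(i < 3, j < 3)
  match val i, val j with
  | 0, 1 => 1 | 0, 2 => -1 | 1, 0 => 1 | 1, 2 => 1
  | 2, 0 => 1 | 2, 1 => -1 | 2, 2 => 1 | _, _ => 0 end.
Definition Dm (t : nat * nat * nat * nat) (sg : algC) : 'M[algC]_3 :=
  let: (p, q, r, s) := t in
  \matrix_(i < 3, j < 3)
  match val i, val j with
  | 0, 0 => p%:R | 0, 1 => q%:R | 1, 0 => r%:R | 1, 1 => s%:R
  | 2, 2 => sg | _, _ => 0 end.
Ltac mx3 := apply/matrixP; let i := fresh "i" in let j := fresh "j" in move=> i j; rewrite !mxE !big_ord_recr big_ord0 /= !mxE;
  case: i => [[|[|[|?]]] ?] //; case: j => [[|[|[|?]]] ?] //=.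


Lemma QR : Qm *m Rm = 1%:M.
Proof. apply/matrixP => i j; rewrite !mxE !big_ord_recr !big_ord0 /= !mxE.
case: i => [[|[|[|?]]] ?] //; case: j => [[|[|[|?]]] ?] //=.
all: rewrite ?mulr1n ?mulr0n; ring.
Qed.
Lemma RQ : Rm *m Qm = 1%:M.
Proof. apply/matrixP => i j; rewrite !mxE !big_ord_recr !big_ord0 /= !mxE.
case: i => [[|[|[|?]]] ?] //; case: j => [[|[|[|?]]] ?] //=.
all: rewrite ?mulr1n ?mulr0n; ring. Qed.
Lemma AhatQ m : (0 < m)%N -> Ahat m *m Qm = Qm *m Dm (0, 1, 1, m)%N (-1).
Proof. case: m => [//|m] _; apply/matrixP => i j; rewrite !mxE !big_ord_recr !big_ord0 /= !mxE.
case: i => [[|[|[|?]]] ?] //; case: j => [[|[|[|?]]] ?] //=.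
all: rewrite ?mulr1n ?mulr0n ?natrS; ring. Qed.
Lemma DmM m t sg : Dm (0, 1, 1, m)%N (-1) *m Dm t sg = Dm (stepL m t) (- sg).
Proof. case: t => [[[p q] r] s]. apply/matrixP => i j; rewrite !mxE !big_ord_recr !big_ord0 /= !mxE.
case: i => [[|[|[|?]]] ?] //; case: j => [[|[|[|?]]] ?] //=.
all: rewrite ?mulr1n ?mulr0n ?natrD ?natrM; ring. Qed.


Lemma Dm_I4 : Dm I4 1 = 1%:M.
Proof.
apply/matrixP => i j; rewrite !mxE.
by case: i => [[|[|[|?]]] ?] //; case: j => [[|[|[|?]]] ?].
Qed.

Lemma foldl_AhatQ a M t sg : all (fun x => 0 < x)%N a -> M *m Qm = Qm *m Dm t sg ->
  foldl (fun M m => Ahat m *m M) M a *m Qm =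
  Qm *m Dm (foldl (fun t m => stepL m t) t a) ((-1) ^+ size a * sg).
Proof.
elim: a M t sg => [|m a IH] M t sg /=; first by rewrite mul1r.
move=> /andP[m0 ha] hM; rewrite (IH _ (stepL m t) (- sg)) //.
  by rewrite exprS mulN1r mulNr mulrN.
by rewrite -mulmxA hM mulmxA AhatQ // -mulmxA DmM.
Qed.

Lemma Ahat_wordQ a : all (fun x => 0 < x)%N a ->
  Ahat_word a *m Qm = Qm *m Dm (pent a) ((-1) ^+ size a).
Proof.
move=> ha; by rewrite /Ahat_word (foldl_AhatQ (t:=I4) (sg:=1)) ?mulr1 // mul1mx Dm_I4 mulmx1.
Qed.

Definition AhatR (a : seq nat) : 'M[algC]_3 := foldr (fun m M => Ahat m *m M) 1%:M a.

Lemma AhatRQ a : all (fun x => 0 < x)%N a ->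
  AhatR a *m Qm = Qm *m Dm (pentR a) ((-1) ^+ size a).
Proof.
elim: a => [|m a IH]; first by move=> _; rewrite mul1mx expr0 Dm_I4 mulmx1.
rewrite /=.
move=> /andP[m0 ha]; rewrite -mulmxA IH // mulmxA AhatQ // -mulmxA DmM.
by rewrite exprS mulN1r.
Qed.


Lemma sum3 (F : 'I_3 -> algC) :
  \sum_i F i = F (@Ordinal 3 0 isT) + F (@Ordinal 3 1 isT) + F (@Ordinal 3 2 isT).
Proof.
rewrite !big_ord_recl big_ord0 addr0 addrA.
by congr (F _ + F _ + F _); apply: val_inj.
Qed.

Lemma eig_Dm (M : 'M[algC]_3) p q r s sg l :
  M *m Qm = Qm *m Dm (p, q, r, s) sg -> eigenvalue M l ->
  l = sg \/ (l - p%:R) * (l - s%:R) = q%:R * r%:R.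
Proof.
move=> hM /eigenvalueP [v hv v0].
have [u [hu un0]] : exists u : 'rV_3, u *m Dm (p, q, r, s) sg = l *: u /\ u != 0.
  exists (v *m Qm); split; first by rewrite -mulmxA -hM mulmxA hv scalemxAl.
  apply: contra v0 => /eqP u0.
  have -> : v = v *m Qm *m Rm by rewrite -mulmxA QR mulmx1.
  by rewrite u0 mul0mx.
pose x := u 0 (@Ordinal 3 0 isT). pose y := u 0 (@Ordinal 3 1 isT).
pose z := u 0 (@Ordinal 3 2 isT).
have E0 : x * p%:R + y * r%:R = l * x.
  have := congr1 (fun X : 'M[algC]_(1,3) => X 0 (@Ordinal 3 0 isT)) hu.
  by rewrite !mxE sum3 !mxE /= mulr0 addr0.
have E1 : x * q%:R + y * s%:R = l * y.
  have := congr1 (fun X : 'M[algC]_(1,3) => X 0 (@Ordinal 3 1 isT)) hu.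
  by rewrite !mxE sum3 !mxE /= mulr0 addr0.
have E2 : z * sg = l * z.
  have := congr1 (fun X : 'M[algC]_(1,3) => X 0 (@Ordinal 3 2 isT)) hu.
  by rewrite !mxE sum3 !mxE /= !mulr0 !add0r.
have [zn0|/negPn/eqP z0] := boolP (z != 0).
  by left; apply: (mulIf zn0); rewrite -E2 mulrC.
right; apply/eqP; rewrite -subr_eq0.
have [xn0|/negPn/eqP x0] := boolP (x != 0).
  have e : ((l - p%:R) * (l - s%:R) - q%:R * r%:R) * x =
    (l - s%:R) * (l * x - (x * p%:R + y * r%:R)) + r%:R * (l * y - (x * q%:R + y * s%:R)).
    by ring.
  rewrite E0 E1 !subrr !mulr0 addr0 in e; move/eqP: e; by rewrite mulf_eq0 (negbTE xn0) orbF.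
have [yn0|/negPn/eqP y0] := boolP (y != 0).
  have e : ((l - p%:R) * (l - s%:R) - q%:R * r%:R) * y =
    (l - p%:R) * (l * y - (x * q%:R + y * s%:R)) + q%:R * (l * x - (x * p%:R + y * r%:R)).
    by ring.
  rewrite E0 E1 !subrr !mulr0 addr0 in e; move/eqP: e; by rewrite mulf_eq0 (negbTE yn0) orbF.
exfalso; move/negP: un0; apply; apply/eqP/matrixP => i j; rewrite ord1 !mxE.
case: j => [[|[|[|?]]] ?] //; [rewrite -x0 | rewrite -y0 | rewrite -z0]; congr (u 0 _); exact: val_inj.
Qed.

Lemma eig_Dm_exist (M : 'M[algC]_3) p q r s sg E :
  M *m Qm = Qm *m Dm (p, q, r, s) sg -> (0 < r)%N ->
  E ^+ 2 - (p%:R + s%:R) * E + (p%:R * s%:R - q%:R * r%:R) = 0 -> eigenvalue M E.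
Proof.
move=> hM r0 hE; apply/eigenvalueP.
pose u : 'rV[algC]_3 :=
  \row_j (match val j with O => r%:R | S O => E - p%:R | _ => 0 end).
have hu : u *m Dm (p, q, r, s) sg = E *: u.
  apply/matrixP => i j; rewrite ord1 !mxE sum3 !mxE /=.
  case: j => [[|[|[|?]]] ?] //=; rewrite ?mxE /=.
  - by ring.
  - have key : r%:R * q%:R + (E - p%:R) * s%:R + 0 * 0 - E * (E - p%:R) =
      - (E ^+ 2 - (p%:R + s%:R) * E + (p%:R * s%:R - q%:R * r%:R)) by ring.
    by apply/eqP; rewrite -subr_eq0 key hE oppr0.
  - by rewrite !mulr0 mul0r !addr0.
exists (u *m Rm).
  have -> : M = Qm *m Dm (p, q, r, s) sg *m Rm by rewrite -hM -mulmxA QR mulmx1.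
  by rewrite !mulmxA -(mulmxA u) RQ mulmx1 hu scalemxAl.
apply/negP => /eqP h; have : u *m Rm *m Qm = 0 by rewrite h mul0mx.
rewrite -mulmxA RQ mulmx1 => /matrixP /(_ 0 (@Ordinal 3 0 isT)).
rewrite !mxE /= => /eqP; rewrite pnatr_eq0; by case: (r) r0.
Qed.


Lemma sqrt_algR (D : algR) : 0 <= D -> exists z : algR, 0 <= z /\ z ^+ 2 = D.
Proof.
move=> D0.
have zr : sqrtC (algRval D) \is Num.real by apply: ger0_real; rewrite sqrtC_ge0.
exists (in_algR zr); split.
  by change (0 <= sqrtC (algRval D)); rewrite sqrtC_ge0.
by apply: val_inj; rewrite /= -expr2 sqrtCK.
Qed.

Lemma lam_props (p q r s : nat) : (0 < q)%N -> (0 < r)%N -> exists E : algR,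
  [/\ E ^+ 2 - (p%:R + s%:R) * E + (p%:R * s%:R - q%:R * r%:R) = 0,
      algRval E ^+ 2 - (p%:R + s%:R) * algRval E + (p%:R * s%:R - q%:R * r%:R) = 0,
      p%:R < E, 1 <= E &
      forall l : algC, (l - p%:R) * (l - s%:R) = q%:R * r%:R -> `|l| <= algRval E].
Proof.
move=> q0 r0.
have q1 : (1 <= q%:R :> algR) by rewrite ler1n.
have r1 : (1 <= r%:R :> algR) by rewrite ler1n.
have p0 : (0 <= p%:R :> algR) by [].
have s0 : (0 <= s%:R :> algR) by [].
have [z [z0 hz]] : exists z : algR, 0 <= z /\ z ^+ 2 = (p%:R - s%:R) ^+ 2 + 4 * q%:R * r%:R.
  apply: sqrt_algR; have := sqr_ge0 (p%:R - s%:R : algR); nra.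
have [E [quad hpE hE1 hE2]] : exists E : algR,
  [/\ E ^+ 2 - (p%:R + s%:R) * E + (p%:R * s%:R - q%:R * r%:R) = 0,
      p%:R < E, 1 <= E & p%:R + s%:R <= 2 * E].
  exists ((p%:R + s%:R + z) / 2); split.
  - have -> : ((p%:R + s%:R + z) / 2) ^+ 2 - (p%:R + s%:R) * ((p%:R + s%:R + z) / 2)
       + (p%:R * s%:R - q%:R * r%:R) =
       (z ^+ 2 - ((p%:R - s%:R) ^+ 2 + 4 * q%:R * r%:R)) / 4 by field.
    by rewrite hz subrr mul0r.
  - nra.
  - nra.
  - nra.
have quadC := congr1 algRval quad.
rewrite !raddfD /= ?raddfB /= ?raddfN /= ?rmorph_nat in quadC.
exists E; split => //.
move=> l hl.
have : (l - algRval E) * (l - algRval (p%:R + s%:R - E)) = 0.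
  rewrite !rmorphB !rmorphD /= !rmorph_nat.
  have -> : (l - algRval E) * (l - (p%:R + s%:R - algRval E)) =
    ((l - p%:R) * (l - s%:R) - q%:R * r%:R) -
    (algRval E ^+ 2 - (p%:R + s%:R) * algRval E + (p%:R * s%:R - q%:R * r%:R)) by ring.
  by rewrite hl quadC !subrr.
move/eqP; rewrite mulf_eq0 !subr_eq0 => /orP[]/eqP->.
  change (`|E| <= E); rewrite ger0_norm //; lra.
change (`|p%:R + s%:R - E| <= E); rewrite ler_norml; apply/andP; split; lra.
Qed.


Lemma sum_tuple0 (T : finType) (F : 0.-tuple T -> algC) : \sum_w F w = F [tuple].
Proof. by rewrite (big_pred1 [tuple]) // => w; apply/esym/eqP; exact: tuple0. Qed.

Lemma sum_tupleS n (T : finType) (F : n.+1.-tuple T -> algC) :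
  \sum_w F w = \sum_x \sum_(w : n.-tuple T) F [tuple of x :: w].
Proof.
rewrite pair_big /=.
rewrite (reindex (fun p : T * n.-tuple T => [tuple of p.1 :: p.2])) //=.
exists (fun w => (thead w, [tuple of behead w])) => [[x w] _|w _] /=.
  by rewrite theadE; congr (_, _); apply: val_inj.
by rewrite [RHS]tuple_eta.
Qed.

Lemma count_int (B c : nat) : (\sum_(i < B) (1 <= i <= c)%N)%N = minn c B.-1.
Proof.
elim: B => [|B IH]; first by rewrite big_ord0 minn0.
rewrite big_ord_recr /= IH.
case: B IH => [|B] IH /=; first by rewrite minn0.
case: (leqP B.+1 c) => h; rewrite ?h /=; lia.
Qed.

Lemma count_int_R (B c : nat) : (c < B)%N ->
  \sum_(i < B) ((1 <= i <= c)%N : nat)%:R = c%:R :> algC.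
Proof. by move=> h; rewrite -natr_sum count_int; congr _%:R; lia. Qed.

Lemma count_one_R (B : nat) : (1 < B)%N ->
  \sum_(i < B) ((nat_of_ord i == 1)%N : nat)%:R = 1 :> algC.
Proof.
move=> h; rewrite -natr_sum (bigD1 (Ordinal h)) //= big1 ?addn0 // => i /negPf.
by rewrite -(inj_eq val_inj) /= => ->.
Qed.

Lemma count_arrow (B m : nat) (t t' : 'I_3) : (m.+1 < B)%N ->
  \sum_(i < B) (arrow t m t' i : nat)%:R = Ahat m t t'.
Proof.
move=> h; rewrite mxE /arrow.
case: t => [[|[|[|?]]] ?] //; case: t' => [[|[|[|?]]] ?] //=;
  first [rewrite count_one_R //; lia | rewrite count_int_R //; lia | rewrite big1 // | idtac].
Qed.

Fixpoint pathOK (B : nat) (t : 'I_3) (b : seq nat) (w : seq ('I_3 * 'I_B)) : bool :=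
  match b, w with
  | m :: b', e :: w' => arrow t m e.1 e.2 && pathOK e.1 b' w'
  | [::], [::] => true
  | _, _ => false
  end.

Lemma boolR_and (x y : bool) : ((x && y : bool) : nat)%:R = (x : nat)%:R * (y : nat)%:R :> algC.
Proof. by case: x; case: y; rewrite /= ?mulr1 ?mulr0. Qed.

Lemma count_paths (B : nat) (b : seq nat) : all (fun m => m.+1 < B)%N b ->
  forall t t' : 'I_3,
  \sum_(w : (size b).-tuple ('I_3 * 'I_B))
     ((pathOK t b w && (last t (map fst w) == t') : bool) : nat)%:R = AhatR b t t'.
Proof.
elim: b => [|m b IH] /=.
  by move=> _ t t'; rewrite sum_tuple0 /= mxE.
move=> /andP[hm hb] t t'; rewrite sum_tupleS.
under eq_bigr => e _ do under eq_bigr => w _ do rewrite /= -andbA boolR_and.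
under eq_bigr => e _ do rewrite -big_distrr /= IH //.
rewrite -(pair_big xpredT xpredT (fun (t'' : 'I_3) (i : 'I_B) => (arrow t m t'' i : nat)%:R * AhatR b t'' t')) /=.
rewrite mxE; apply: eq_bigr => t'' _.
by rewrite -big_distrl /= count_arrow.
Qed.


Lemma pathOK_nth B t b (w : seq ('I_3 * 'I_B)) e0 :
  pathOK t b w = (size w == size b) &&
    all (fun j => arrow (nth t (t :: map fst w) j) (nth 0%N b j) (nth e0 w j).1 (nth e0 w j).2)
        (iota 0 (size b)).
Proof.
elim: b t w => [|m b IH] t [|e w] //=.
rewrite IH eqSS (_ : iota 1 (size b) = map (addn 1) (iota 0 (size b))) ?all_map; last by rewrite -iotaDl.
case hs: (size w == size b); rewrite /= ?andbF //.
congr (_ && _); apply: eq_in_all => j; rewrite mem_iota /= => hj.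
rewrite /= !add0n; congr (arrow _ _ _ _).
rewrite add0n in hj; apply: set_nth_default; rewrite /= size_map (eqP hs); exact: ltnW.
Qed.

Lemma arrow_alph t m t' i : arrow t m t' i -> in_alph m t' i.
Proof.
rewrite /arrow /in_alph.
case: t => [[|[|[|?]]] ?] //; case: t' => [[|[|[|?]]] ?] //=; lia.
Qed.

Lemma valid_pathOK a (w : (size a).-tuple (letter a)) t : (0 < size a)%N ->
  valid_word w && arrow t (head 0%N a) (nth (ord0, ord0) w 0).1 (nth (ord0, ord0) w 0).2
  = pathOK t a w.
Proof.
move=> ha; rewrite (pathOK_nth _ _ _ (ord0, ord0)) size_tuple eqxx /=.
rewrite /valid_word; apply/idP/idP.
- move=> /andP[/andP[_ /forallP h2] h0]; apply/allP => j; rewrite mem_iota add0n => /= hj.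
  case: j hj => [|j] hj /=; first by rewrite nth0.
  have := h2 (Ordinal hj); move/forallP/(_ (Ordinal (ltnW hj))) => /implyP /(_ (eqxx _)).
  rewrite !(tnth_nth (ord0, ord0)) /= (nth_map (ord0, ord0)) //.
  by rewrite size_tuple; apply: ltnW.
- move=> /allP h; apply/andP; split; [apply/andP; split|].
  + apply/forallP => j; rewrite (tnth_nth (ord0, ord0)).
    apply: (@arrow_alph (nth t (t :: map fst w) j)); apply: h.
    by rewrite mem_iota leq0n add0n ltn_ord.
  + apply/forallP => j; apply/forallP => j'; apply/implyP => /eqP hj.
    move: (h j); rewrite mem_iota leq0n add0n ltn_ord => /(_ isT).
    rewrite !(tnth_nth (ord0, ord0)) -hj /= (nth_map (ord0, ord0)) // (size_tuple w).
    by have := ltn_ord j; rewrite -hj; apply: ltnW.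
  + by move: (h 0%N); rewrite mem_iota leq0n add0n ha /= nth0 => /(_ isT).
Qed.


Definition Xm a : 'M[algC]_(#|{: Words a}|, 3) :=
  \matrix_(i, t) ((tail_type (enum_val i) == t) : nat)%:R.
Definition Ym a : 'M[algC]_(3, #|{: Words a}|) :=
  \matrix_(t, j) (arrow t (head 0%N a) (header (enum_val j)).1 (header (enum_val j)).2 : nat)%:R.

Lemma A_wordXY a : A_word a = Xm a *m Ym a.
Proof.
apply/matrixP => i j; rewrite !mxE (bigD1 (tail_type (enum_val i))) //= big1.
  by rewrite !mxE eqxx mul1r addr0.
by move=> t ht; rewrite !mxE eq_sym (negbTE ht) mul0r.
Qed.

Lemma sum_Words a (G : (size a).-tuple (letter a) -> algC) :
  \sum_(w : Words a) G (val w) = \sum_(w | valid_word w) G w.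
Proof.
rewrite (reindex_omap (val : Words a -> _) insub); last first.
  by move=> w hw; rewrite insubT.
by apply: eq_bigl => -[w hw] /=; rewrite insubT ?hw /= eqxx.
Qed.

Lemma last_fst (T U : Type) (s : seq (T * U)) t e0 : (0 < size s)%N ->
  last t (map fst s) = (nth e0 s (size s).-1).1.
Proof.
case: s => [|e s] //= _.
by rewrite (last_map fst) (set_nth_default e) ?ltnSn // (nth_last e).
Qed.

Lemma max_lt a m : m \in a -> (m.+1 < idxB a)%N.
Proof. by move=> h; rewrite /idxB ltnS ltnS; apply: leq_bigmax_seq. Qed.

Lemma YXm a : (0 < size a)%N -> Ym a *m Xm a = AhatR a.
Proof.
move=> ha; apply/matrixP => t t'; rewrite !mxE.
rewrite -(count_paths (B := idxB a)); last by apply/allP => m; apply: max_lt.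
rewrite (eq_bigr (fun j => ((arrow t (head 0%N a) (header (enum_val j)).1 (header (enum_val j)).2
   && (tail_type (enum_val j) == t')) : nat)%:R)); last first.
  by move=> j _; rewrite !mxE boolR_and.
rewrite -(big_enum_val (A := {: Words a})
  (fun w => ((arrow t (head 0%N a) (header w).1 (header w).2
   && (tail_type w == t')) : nat)%:R)) /=.
rewrite (eq_bigl xpredT) //.
rewrite (sum_Words (fun w => ((arrow t (head 0%N a) (nth (ord0, ord0) w 0).1 (nth (ord0, ord0) w 0).2
   && ((nth (ord0, ord0) w (size a).-1).1 == t')) : nat)%:R)).
rewrite big_mkcond /=; apply: eq_bigr => w _.
rewrite -(valid_pathOK w t ha).
have -> : last t (map fst w) = (nth (ord0, ord0) w (size a).-1).1.
  by rewrite (@last_fst _ _ w t (ord0, ord0)) ?size_tuple.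
by case: (valid_word w); rewrite /= ?andbA.
Qed.


Lemma eig_XY n m (X : 'M[algC]_(n, m)) (Y : 'M[algC]_(m, n)) l :
  l != 0 -> eigenvalue (X *m Y) l -> eigenvalue (Y *m X) l.
Proof.
move=> l0 /eigenvalueP [v hv v0]; apply/eigenvalueP; exists (v *m X).
  by rewrite mulmxA -(mulmxA v) hv scalemxAl.
apply: contra v0 => /eqP w0.
have : l *: v = 0 by rewrite -hv mulmxA w0 mul0mx.
by move/eqP; rewrite scaler_eq0 (negbTE l0).
Qed.

Definition nonneg n m (M : 'M[algC]_(n, m)) := forall i j, 0 <= M i j.

Lemma nonneg_mul n m k (A : 'M[algC]_(n, m)) (B : 'M[algC]_(m, k)) :
  nonneg A -> nonneg B -> nonneg (A *m B).
Proof. by move=> hA hB i j; rewrite mxE; apply: sumr_ge0 => l _; apply: mulr_ge0. Qed.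

Lemma pos_mul n m k (A : 'M[algC]_(n, m)) (B : 'M[algC]_(m, k)) i l j :
  nonneg A -> nonneg B -> 0 < A i l -> 0 < B l j -> 0 < (A *m B) i j.
Proof.
move=> hA hB h1 h2; rewrite mxE (bigD1 l) //=.
apply: ltr_wpDr; first by apply: sumr_ge0 => l' _; apply: mulr_ge0.
exact: mulr_gt0.
Qed.

Definition gG (i j : 'I_3) : bool :=
  ((val i, val j) \in [:: (0, 1); (1, 0); (1, 2); (2, 0)])%N.

Definition ords3 : seq 'I_3 := [:: @Ordinal 3 0 isT; @Ordinal 3 1 isT; @Ordinal 3 2 isT].

Lemma mem_ords3 (i : 'I_3) : i \in ords3.
Proof.
by rewrite /ords3 !inE; case: i => [[|[|[|?]]] hi].
Qed.

Fixpoint gp (L : nat) (i j : 'I_3) : bool :=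
  if L is L'.+1 then has (fun l => gG i l && gp L' l j) ords3 else (val i == val j).

Lemma gp5' : all (fun i => all (fun j => gp 5 i j) ords3) ords3.
Proof. by vm_compute. Qed.

Lemma gp5 i j : gp 5 i j.
Proof. by move: gp5' => /allP /(_ i (mem_ords3 i)) /allP /(_ j (mem_ords3 j)). Qed.

Lemma gp_full L i j : (5 <= L)%N -> gp L i j.
Proof.
elim: L i j => [|L IH] i j //; rewrite leq_eqVlt => /orP[/eqP <-|h].
  exact: gp5.
have [l hl] : exists l, gG i l.
  by case: i => [[|[|[|?]]] hi]; [exists (@Ordinal 3 1 isT)|exists (@Ordinal 3 0 isT)|exists (@Ordinal 3 0 isT)|].
apply/hasP; exists l; first exact: mem_ords3.
by apply/andP; split; [exact: hl | exact: IH].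
Qed.

Definition PosL (L : nat) (M : 'M[algC]_3) := nonneg M /\ forall i j, gp L i j -> 0 < M i j.

Lemma PosL0 : PosL 0 1%:M.
Proof.
split; first by move=> i j; rewrite mxE; case: (i == j).
by move=> i j /= /eqP /val_inj ->; rewrite mxE eqxx ltr01.
Qed.

Lemma Ahat_nonneg m : nonneg (Ahat m).
Proof. by move=> i j; rewrite mxE; case: i => [[|[|[|?]]] ?]; case: j => [[|[|[|?]]] ?]. Qed.

Lemma Ahat_pos m i j : (0 < m)%N -> gG i j -> 0 < Ahat m i j.
Proof.
move=> hm; rewrite mxE /gG.
case: i => [[|[|[|?]]] ?]; case: j => [[|[|[|?]]] ?] //=; rewrite ?ltr0n //; lia.
Qed.

Lemma PosLS L m M : (0 < m)%N -> PosL L M -> PosL L.+1 (Ahat m *m M).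
Proof.
move=> hm [hn hp]; split; first exact: nonneg_mul (Ahat_nonneg m) hn.
move=> i j /hasP [l _ /andP[h1 h2]].
exact: pos_mul (Ahat_nonneg m) hn (Ahat_pos hm h1) (hp _ _ h2).
Qed.


Lemma foldl_Ahat_mul a (M : 'M[algC]_3) :
  foldl (fun M m => Ahat m *m M) M a = Ahat_word a *m M.
Proof.
rewrite /Ahat_word; elim: a M => [|m a IH] M /=; first by rewrite mul1mx.
by rewrite IH (IH (Ahat m *m 1%:M)) mulmx1 mulmxA.
Qed.

Lemma foldr_Ahat_mul a (M : 'M[algC]_3) :
  foldr (fun m M => Ahat m *m M) M a = AhatR a *m M.
Proof.
rewrite /AhatR; elim: a => [|m a IH] /=; first by rewrite mul1mx.
by rewrite IH mulmxA.
Qed.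

Lemma PosL_foldl a L M : all (fun x => 0 < x)%N a -> PosL L M ->
  PosL (L + size a) (foldl (fun M m => Ahat m *m M) M a).
Proof.
elim: a L M => [|m a IH] L M /=; first by rewrite addn0.
move=> /andP[hm ha] hM; rewrite addnS -addSn; apply: IH => //; exact: PosLS.
Qed.

Lemma PosL_foldr a L M : all (fun x => 0 < x)%N a -> PosL L M ->
  PosL (L + size a) (foldr (fun m M => Ahat m *m M) M a).
Proof.
elim: a => [|m a IH] /=; first by rewrite addn0.
move=> /andP[hm ha] hM; rewrite addnS; apply: PosLS => //; exact: IH.
Qed.

Lemma one_mx3 : (1 : 'M[algC]_3) = 1%:M.
Proof. by []. Qed.

Lemma PosL_word_pow a n : all (fun x => 0 < x)%N a ->
  PosL (n * size a) (Ahat_word a ^+ n).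
Proof.
move=> ha; elim: n => [|n IH]; first by rewrite expr0 one_mx3; exact: PosL0.
rewrite exprS -mulmxE -foldl_Ahat_mul mulSn addnC; exact: PosL_foldl.
Qed.

Lemma PosL_R_pow a n : all (fun x => 0 < x)%N a ->
  PosL (n * size a) (AhatR a ^+ n).
Proof.
move=> ha; elim: n => [|n IH]; first by rewrite expr0 one_mx3; exact: PosL0.
rewrite exprS -mulmxE -foldr_Ahat_mul mulSn addnC; exact: PosL_foldr.
Qed.

Lemma prim_word a : (0 < size a)%N -> all (fun x => 0 < x)%N a -> primitive (Ahat_word a).
Proof.
move=> hs ha; split.
  by have [hn _] := PosL_word_pow 1 ha; rewrite expr1 in hn.
exists 5%N => i j; have [_ hp] := PosL_word_pow 5 ha; apply: hp; apply: gp_full.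
by rewrite -[5%N]muln1 leq_mul2l.
Qed.

Lemma powXY N (X : 'M[algC]_(N, 3)) (Y : 'M[algC]_(3, N)) n :
  (X *m Y) ^+ n.+1 = X *m (Y *m X) ^+ n *m Y.
Proof.
elim: n => [|n IH]; first by rewrite expr1 expr0 one_mx3 mulmx1.
by rewrite exprS IH -!mulmxE exprS -!mulmxE !mulmxA.
Qed.


Lemma alph_arrow m (t' : 'I_3) i : (0 < m)%N -> in_alph m t' i ->
  exists t : 'I_3, arrow t m t' i.
Proof.
rewrite /in_alph /arrow => hm.
case: t' => [[|[|[|?]]] ?] //= h.
- by exists (@Ordinal 3 1 isT).
- by exists (@Ordinal 3 0 isT).
- by exists (@Ordinal 3 1 isT).
Qed.

Lemma header_reach a (w : Words a) : (0 < size a)%N -> all (fun x => 0 < x)%N a ->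
  exists t, arrow t (head 0%N a) (header w).1 (header w).2.
Proof.
move=> hs ha; apply: alph_arrow.
  by case: a hs ha {w} => [|m a] //= _ /andP[].
have := valP w; rewrite /valid_word => /andP[/forallP /(_ (Ordinal hs)) h _].
by rewrite (tnth_nth (ord0, ord0)) /= nth0 in h.
Qed.

Lemma prim_A a : (0 < size a)%N -> all (fun x => 0 < x)%N a -> primitive (A_word a).
Proof.
move=> hs ha.
have hX : nonneg (Xm a) by move=> i j; rewrite mxE ler0n.
have hY : nonneg (Ym a) by move=> i j; rewrite mxE ler0n.
split; first by move=> i j; rewrite mxE ler0n.
exists 6%N => i j; rewrite A_wordXY powXY YXm //.
have [hn hp] := PosL_R_pow 5 ha.
have [t1 ht1] := header_reach (enum_val j) hs ha.
apply: (@pos_mul _ _ _ _ _ i t1 j) => //.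
- exact: nonneg_mul.
- apply: (@pos_mul _ _ _ _ _ i (tail_type (enum_val i)) t1) => //.
  + by rewrite mxE eqxx ltr01.
  + apply: hp; apply: gp_full; by rewrite -[5%N]muln1 leq_mul2l.
- by rewrite mxE ht1 ltr01.
Qed.



Lemma qpair_ext d1 d2 n : (forall j, d1 j = d2 j) -> qpair d1 n = qpair d2 n.
Proof. by move=> h; elim: n => [|n IH] //=; rewrite IH h. Qed.

Lemma qbounds (a : seq nat) p q r s (E : algR) :
  (0 < size a)%N -> all (fun x => 0 < x)%N a -> pent a = (p, q, r, s) ->
  E ^+ 2 - (p%:R + s%:R) * E + (p%:R * s%:R - q%:R * r%:R) = 0 ->
  p%:R < E -> 1 <= E ->
  exists C : algR, 1 < C /\ forall n : nat,
    C^-1 * E ^+ n <= ((qpair (fun j => nth 0%N a (j %% size a)) (size a * n)).2)%:R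
      <= C * E ^+ n.
Proof.
move=> hs ha hp quad hpE hE1.
set d := fun j => nth 0%N a (j %% size a).
have dpos j : (0 < d j)%N.
  by rewrite /d; move/all_nthP: ha; apply; rewrite ltn_pmod.
have step n : qpair d (size a * n.+1) = lin (pent a) (qpair d (size a * n)).
  rewrite mulnS addnC qpair_add.
    by rewrite -{1}(lin_I4 (qpair d (size a * n))) foldl_stepf_lin.
  by move=> i hi; rewrite /d mulnC modnMDl modn_small.
pose K := E - p%:R.
have K0 : 0 < K by rewrite /K subr_gt0.
have inv n : r%:R * ((qpair d (size a * n)).1)%:R + K * ((qpair d (size a * n)).2)%:R
             = E ^+ n * K.
  elim: n => [|n IH]; first by rewrite muln0 /= mulr0 add0r mulr1 expr0 mul1r.
  rewrite step hp.
  case: (qpair d (size a * n)) IH => X Y /= IH.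
  rewrite !natrD !natrM exprS -mulrA -IH.
  apply/eqP; rewrite -subr_eq0.
  have -> : r%:R * (p%:R * X%:R + q%:R * Y%:R) + K * (r%:R * X%:R + s%:R * Y%:R) -
      E * (r%:R * X%:R + K * Y%:R) =
      - (Y%:R) * (E ^+ 2 - (p%:R + s%:R) * E + (p%:R * s%:R - q%:R * r%:R)) by rewrite /K; ring.
  by rewrite quad mulr0.
exists ((r%:R + 2 * K) / K); split.
  rewrite ltr_pdivlMr // mul1r; have : 0 <= r%:R :> algR by []. lra.
move=> n; have := inv n; have := @qpair_le d (size a * n) dpos.
case: (qpair d (size a * n)) => X Y /= hXY hinv.
have hXYR : X%:R <= Y%:R :> algR by rewrite ler_nat.
have X0 : 0 <= X%:R :> algR by [].
have r0 : 0 <= r%:R :> algR by [].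
have P0 : 0 < E ^+ n by apply: exprn_gt0; lra.
have rK : 0 < r%:R + 2 * K by lra.
rewrite invf_div; apply/andP; split.
  by rewrite mulrAC ler_pdivrMr //; nra.
by rewrite mulrAC ler_pdivlMr //; nra.
Qed.


End Aux.
Import Aux.

Theorem lemma4p1 (R : realType) (a : seq nat) :
  (0 < size a)%N -> all (fun x => 0 < x)%N a ->
  primitive (Ahat_word a) /\ primitive (A_word a) /\
  exists E : algC,
    PF_eigenvalue (Ahat_word a) E /\ PF_eigenvalue (A_word a) E /\
    forall x : R, in_P a x ->
      exists C : algC, 1 < C /\
        forall n : nat,
          C^-1 * E ^+ n <= (qn x (size a * n))%:R <= C * E ^+ n.
Proof.
move=> hs ha; split; first exact: prim_word.
split; first exact: prim_A.
case hp : (pent a) => [[[p q] r] s].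
have := pent_pos hs ha; rewrite hp => /and3P[q0 r0 s0].
have [E [quad quadC hpE hE1 hbound]] := lam_props p s q0 r0.
have hE1C : 1 <= algRval E by exact: hE1.
have E0 : 0 <= algRval E by apply: le_trans hE1C.
have En0 : algRval E != 0 by rewrite gt_eqF // (lt_le_trans ltr01).
have hsg : `|(-1 : algC) ^+ size a| <= algRval E by rewrite normrX normrN1 expr1n.
have hW := Ahat_wordQ ha; rewrite hp in hW.
have hR := AhatRQ ha; rewrite pentR_tr hp /= in hR.
have quadC' : algRval E ^+ 2 - (p%:R + s%:R) * algRval E + (p%:R * s%:R - r%:R * q%:R) = 0.
  by rewrite [r%:R * _]mulrC.
exists (algRval E); split; [|split].
- split.
    exists (algRval E); last exact: ger0_norm.
    by rewrite -eigenvalue_root_char; apply: (eig_Dm_exist hW).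
  move=> l; rewrite -eigenvalue_root_char => /(eig_Dm hW) [->|]; first exact: hsg.
  exact: hbound.
- split.
    exists (algRval E); last exact: ger0_norm.
    rewrite -eigenvalue_root_char A_wordXY; apply: eig_XY => //.
    by rewrite YXm //; apply: (eig_Dm_exist hR).
  move=> l; rewrite -eigenvalue_root_char A_wordXY => hl.
  have [->|l0] := eqVneq l 0; first by rewrite normr0.
  have := eig_XY l0 hl; rewrite YXm // => /(eig_Dm hR) [->|h]; first exact: hsg.
  by apply: hbound; rewrite h mulrC.
- move=> x [_ [_ hd]].
  have [C [C1 hC]] := @qbounds a p q r s E hs ha hp quad hpE hE1.
  exists (algRval C); split; first exact: C1.
  move=> n; rewrite /qn (@qpair_ext _ (fun j => nth 0%N a (j %% size a))); last first.
    by move=> j; rewrite hd.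
  have -> : (algRval C)^-1 * algRval E ^+ n = algRval (C^-1 * E ^+ n).
    by rewrite rmorphM fmorphV rmorphXn.
  have -> : algRval C * algRval E ^+ n = algRval (C * E ^+ n).
    by rewrite rmorphM rmorphXn.
  rewrite -(rmorph_nat algRval); exact: hC.
Qed.
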